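(* Let $\mathfrak g=\mathfrak k+_\rho V$ be the semidirect sum of a finite-dimensional real Lie algebra $\mathfrak k$ and a commutative ideal $V$, where $\rho:\mathfrak k\to\operatorname{End}(V)$ is a representation. Let $f$ be a polynomial on $\mathfrak g^*=\mathfrak k^*\oplus V^*$ such that $$f(M,v)=f(M+L,v)\quad\text{for all } (M,v)\in\mathfrak g^* \text{ and all } L\in\mathrm{St}_{\rho^*}(v)^\perp\subset\mathfrak k^*.$$ Then $f\in\operatorname{Ann}(V)$.
   Context: Elements of $\mathfrak g^*$ are written as pairs $(M,v)$ with $M\in\mathfrak k^*$, $v\in V^*$. $\rho^*:\mathfrak k\to\operatorname{End}(V^* )$ is the dual representation, and $\mathrm{St}_{\rho^*}(v)=\{X\in\mathfrak k\mid\rho^*(X)v=0\}$; $\mathrm{St}_{\rho^*}(v)^\perp=\{L\in\mathfrak k^*\mid\langle L,X\rangle=0\ \forall X\in\mathrm{St}_{\rho^*}(v)\}$. $S(\mathfrak g)$ is the polynomial algebra on $\mathfrak g^*$ with Lie–Poisson bracket $\{f,g\}(x)=\langle x,[df(x),dg(x)]\rangle$, and $\operatorname{Ann}(V)=\{f\in S(\mathfrak g)\mid\{f,\eta\}=0\ \forall\eta\in V\}$. *)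

(* Defs.v *)
From HB Require Import structures.
From mathcomp Require Import all_boot all_order all_algebra.
From mathcomp Require Import reals.
From mathcomp Require Import mpoly.
Set Implicit Arguments. Unset Strict Implicit. Unset Printing Implicit Defensive.
Import Order.TTheory GRing.Theory Num.Theory.
Local Open Scope ring_scope.

(* Setting: k = 'cV[R]_n (dual k^* = 'rV[R]_n), V = 'cV[R]_m (dual V^* = 'rV[R]_m),
   pairings <M,X> = (M *m X) 0 0.  The Lie bracket of k is given by structure
   constants c i j l : [e_i, e_j] = \sum_l c i j l e_l; the representation by
   the matrices rho i = rho(e_i), extended linearly. *)

Section LieSemidirect.
Variables (R : realType) (n m : nat).
Variable c : 'I_n -> 'I_n -> 'I_n -> R.
Variable rho : 'I_n -> 'M[R]_m.

Definition kbr (X Y : 'cV[R]_n) : 'cV[R]_n :=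
  \col_l (\sum_i \sum_j X i 0 * Y j 0 * c i j l).

Definition is_lie_algebra : Prop :=
  (forall X Y, kbr X Y = - kbr Y X) /\
  (forall X Y Z, kbr X (kbr Y Z) + kbr Y (kbr Z X) + kbr Z (kbr X Y) = 0).

Definition rhoX (X : 'cV[R]_n) : 'M[R]_m := \sum_i X i 0 *: rho i.

Definition is_representation : Prop :=
  forall X Y, rhoX (kbr X Y) = rhoX X *m rhoX Y - rhoX Y *m rhoX X.

Definition rho_star (X : 'cV[R]_n) (v : 'rV[R]_m) : 'rV[R]_m := - (v *m rhoX X).

Definition St (v : 'rV[R]_m) (X : 'cV[R]_n) : Prop := rho_star X v = 0.

Definition St_perp (v : 'rV[R]_m) (L : 'rV[R]_n) : Prop :=
  forall X, St v X -> (L *m X) 0 0 = 0.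

Definition g := ('cV[R]_n * 'cV[R]_m)%type.
Definition gstar := ('rV[R]_n * 'rV[R]_m)%type.

Definition gbr (a b : g) : g :=
  (kbr a.1 b.1, rhoX a.1 *m b.2 - rhoX b.1 *m a.2).

Definition pairing (x : gstar) (a : g) : R :=
  (x.1 *m a.1) 0 0 + (x.2 *m a.2) 0 0.

(* coordinates of a point of g^*: first n coords on k^*, last m on V^* *)
Definition coords (x : gstar) : 'I_(n + m) -> R :=
  fun i => match split i with inl a => x.1 0 a | inr b => x.2 0 b end.

(* polynomials on g^*, i.e. S(g) *)
Notation Sg := {mpoly R[n + m]}.

Definition ev (f : Sg) (x : gstar) : R := f.@[coords x].

(* differential df(x) in g (identifying g^** = g) *)
Definition dpoly (f : Sg) (x : gstar) : g :=
  (\col_a ev (mderiv (lshift m a) f) x, \col_b ev (mderiv (rshift n b) f) x).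

Definition LP (f h : Sg) (x : gstar) : R :=
  pairing x (gbr (dpoly f x) (dpoly h x)).

(* the element eta of V seen as a (linear) element of S(g) *)
Definition Vpoly (eta : 'cV[R]_m) : Sg := \sum_b eta b 0 *: 'X_(rshift n b).

Definition in_Ann_V (f : Sg) : Prop :=
  forall eta : 'cV[R]_m, forall x : gstar, LP f (Vpoly eta) x = 0.

End LieSemidirect.

(* Main.v *)
Require Import Defs.
From HB Require Import structures.
From mathcomp Require Import all_boot all_order all_algebra.
From mathcomp Require Import reals.
From mathcomp Require Import mpoly.
From mathcomp Require Import ring.
From Stdlib Require Import FunctionalExtensionality.
Set Implicit Arguments. Unset Strict Implicit. Unset Printing Implicit Defensive.
Import Order.TTheory GRing.Theory Num.Theory.
Local Open Scope ring_scope.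
Section Aux.
Variables (R : realType) (N : nat) (z d : 'I_N -> R).
Definition lin (t : R) := fun i => z i + t * d i.
Definition Dir (p : {mpoly R[N]}) := \sum_i d i * (mderiv i p).@[z].
Definition good (p : {mpoly R[N]}) := exists Q : {poly R},
  (forall t, Q.[t] = p.@[lin t]) /\ Q^`().[0] = Dir p.

Lemma lin0 (p : {mpoly R[N]}) : p.@[lin 0] = p.@[z].
Proof. by congr meval; apply: functional_extensionality => i; rewrite /lin mul0r addr0. Qed.

Lemma good0 : good 0.
Proof.
exists 0; split => [t|]; first by rewrite horner0 meval0.
by rewrite deriv0 horner0 /Dir big1 // => i _; rewrite mderiv0 meval0 mulr0.
Qed.

Lemma goodD p q : good p -> good q -> good (p + q).
Proof.
move=> [P [hP dP]] [Q [hQ dQ]]; exists (P + Q); split => [t|].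
  by rewrite hornerD hP hQ mevalD.
rewrite derivD hornerD dP dQ /Dir -big_split /=; apply: eq_bigr => i _.
by rewrite mderivD mevalD mulrDr.
Qed.

Lemma goodZ c p : good p -> good (c *: p).
Proof.
move=> [P [hP dP]]; exists (c *: P); split => [t|].
  by rewrite hornerZ hP mevalZ.
rewrite derivZ hornerZ dP /Dir mulr_sumr; apply: eq_bigr => i _.
by rewrite mderivZ mevalZ mulrCA.
Qed.

Lemma goodM p q : good p -> good q -> good (p * q).
Proof.
move=> [P [hP dP]] [Q [hQ dQ]]; exists (P * Q); split => [t|].
  by rewrite hornerM hP hQ mevalM.
rewrite derivM hornerD !hornerM dP dQ hP hQ !lin0 /Dir mulr_suml mulr_sumr -big_split /=.
apply: eq_bigr => i _.
by rewrite mderivM mevalD !mevalM; ring.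
Qed.

Lemma good1 : good 1.
Proof.
exists 1; split => [t|]; first by rewrite hornerC meval1.
rewrite -[1]/(1%:P) derivC horner0 /Dir big1 // => i _.
by rewrite -mpolyC1 mderivC meval0 mulr0.
Qed.

Lemma goodXi i : good 'X_i.
Proof.
exists ((z i)%:P + d i *: 'X); split => [t|].
  by rewrite hornerD hornerC hornerZ hornerX mevalXU /lin mulrC.
rewrite derivD derivC derivZ derivX add0r hornerZ hornerC mulr1 /Dir.
rewrite (bigD1 i) //= big1 => [|j /negbTE ji].
  rewrite mderivX mnm1E eqxx mulr1n.
  have -> : (U_(i) - U_(i))%MM = 0%MM by apply/mnmP => k; rewrite mnmBE subnn mnm0E.
  by rewrite mpolyX0 scale1r meval1 mulr1 addr0.
by rewrite mderivX mnm1E eq_sym ji scale0r meval0 mulr0.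
Qed.

Lemma goodall p : good p.
Proof.
elim/mpolyind: p => [|c m p _ _ hp]; first exact: good0.
apply: goodD => //; apply: goodZ.
rewrite mpolyXE_id; apply: big_ind => //; first exact: good1; first exact: goodM.
move=> i _; elim: (m i) => [|k ih]; first by rewrite expr0; exact: good1.
by rewrite exprS; apply: goodM => //; exact: goodXi.
Qed.

End Aux.

Lemma const_poly (R : realType) (Q : {poly R}) : (forall t, Q.[t] = Q.[0]) -> Q^`() = 0.
Proof.
move=> h.
suff -> : Q = (Q.[0])%:P by rewrite derivC.
apply/eqP; rewrite -subr_eq0; apply/eqP.
set r := Q - _.
apply: contra_eq (erefl true) => nz.
have := @max_poly_roots _ r [seq i%:R | i <- iota 0 (size r)] nz.
rewrite size_map size_iota ltnn; apply => //.
  apply/allP => x /mapP [i _ ->]; by rewrite /root hornerD hornerN hornerC h subrr.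
rewrite map_inj_uniq ?iota_uniq // => a b /eqP; rewrite eqr_nat => /eqP.
done.
Qed.

Lemma mderivXE (R : realType) (N : nat) (x : 'I_N -> R) i j :
  (mderiv j ('X_i : {mpoly R[N]})).@[x] = (i == j)%:R.
Proof.
rewrite mderivX mnm1E; case: eqP => [<-|_]; last by rewrite scale0r meval0.
have -> : (U_(i) - U_(i))%MM = 0%MM by apply/mnmP => k; rewrite mnmBE subnn mnm0E.
by rewrite mpolyX0 scale1r meval1.
Qed.

Lemma evV (R : realType) n m (eta : 'cV[R]_m) x j :
  ev (mderiv j (Vpoly n eta)) x = \sum_b eta b 0 * (rshift n b == j)%:R.
Proof.
rewrite /ev /Vpoly (big_morph _ (@mderivD _ _ j) (@mderiv0 _ _ j)) (big_morph _ (mevalD _) (meval0 _)); apply: eq_bigr => b _.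
by rewrite mderivZ mevalZ mderivXE.
Qed.

Lemma coordsE (R : realType) n m (M : 'rV[R]_n) (v : 'rV[R]_m) :
  (forall a, coords (M, v) (lshift m a) = M 0 a) /\
  (forall b, coords (M, v) (rshift n b) = v 0 b).
Proof.
split=> [a|b]; rewrite /coords.
  by rewrite (unsplitK (inl a)).
by rewrite (unsplitK (inr b)).
Qed.

Theorem lemma11 (R : realType) (n m : nat)
  (c : 'I_n -> 'I_n -> 'I_n -> R) (rho : 'I_n -> 'M[R]_m)
  (hlie : is_lie_algebra c) (hrep : is_representation c rho)
  (f : {mpoly R[n + m]})
  (hf : forall (M : 'rV[R]_n) (v : 'rV[R]_m) (L : 'rV[R]_n),
          St_perp rho v L -> ev f (M, v) = ev f (M + L, v)) :
  in_Ann_V c rho f.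
Proof.
move=> eta [M v].
have [cl cr] := coordsE M v.
set A := \col_a ev (mderiv (lshift m a) f) (M, v).
set w := v *m rhoX rho A.
have dV : dpoly (Vpoly n eta) (M, v) = (0, eta).
  congr pair; apply/matrixP => i k; rewrite !mxE evV ?ord1.
    by rewrite big1 // => b _; rewrite eq_rlshift mulr0.
  rewrite (bigD1 i) //= eqxx mulr1 big1 ?addr0 // => b /negbTE bi.
  by rewrite eq_rshift bi mulr0.
have w0 : w = 0.
  pose C : 'M[R]_(m, n) := \matrix_(j, i) (v *m rho i) 0 j.
  have CX : forall X, C *m X = (v *m rhoX rho X)^T.
    move=> X; apply/matrixP => j k; rewrite ord1 [RHS]mxE [LHS]mxE.
    rewrite /rhoX mulmx_sumr summxE; apply: eq_bigr => i _.
    by rewrite -scalemxAr [RHS]mxE [C _ _]mxE mulrC.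
  pose L := w *m C.
  have hL : forall t, St_perp rho v (t *: L).
    move=> t X; rewrite /St /rho_star => /eqP; rewrite oppr_eq0 => /eqP hX.
    by rewrite -scalemxAl mxE -mulmxA CX hX trmx0 mulmx0 mxE mulr0.
  have [Q [hQ dQ]] := goodall (coords (M, v)) (coords (L, 0)) f.
  have hlin t : lin (coords (M, v)) (coords (L, 0)) t = coords (M + t *: L, v).
    apply: functional_extensionality => i; rewrite /lin /coords.
    by case: split => a; rewrite !mxE ?mulr0 ?addr0.
  have Qc : forall t, Q.[t] = Q.[0].
    move=> t; rewrite !hQ !hlin; change (ev f (M + t *: L, v) = ev f (M + 0 *: L, v)).
    by rewrite -!hf.
  have DE : Dir (coords (M, v)) (coords (L, 0)) f = 0 by rewrite -dQ (const_poly Qc) horner0.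
  have [lL rL] := coordsE L (0 : 'rV[R]_m).
  move: DE; rewrite /Dir big_split_ord /= [X in _ + X]big1 ?addr0; last first.
    by move=> b _; rewrite rL mxE mul0r.
  have -> : \sum_(i < n) coords (L, 0) (lshift m i) * (f^`M(lshift m i)).@[coords (M, v)]
     = (L *m A) 0 0.
    by rewrite mxE; apply: eq_bigr => a _; rewrite lL [A _ _]mxE.
  rewrite /L -mulmxA CX mxE => sw.
  have hw : forall j, w 0 j * w 0 j = 0.
    move=> j; apply: (@psumr_eq0P _ _ xpredT (fun k => w 0 k * w 0 k)) => //.
      by move=> k _; rewrite -expr2 sqr_ge0.
    rewrite -[RHS]sw; apply: eq_bigr => k _; rewrite [_^T _ _]mxE; done.
  apply/matrixP => i j; rewrite ord1 [RHS]mxE.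
  by have /eqP := hw j; rewrite mulf_eq0 orbb => /eqP.
rewrite /LP dV /gbr /pairing /=.
have -> : kbr c (dpoly f (M, v)).1 0 = 0.
  apply/matrixP => i k; rewrite !mxE big1 // => a _; rewrite big1 // => b _.
  by rewrite !mxE mulr0 mul0r.
have h0 : rhoX rho (0 : 'cV[R]_n) = 0.
  by rewrite /rhoX big1 // => i _; rewrite mxE scale0r.
rewrite h0.
rewrite mul0mx subr0 mulmx0 mxE add0r.
rewrite -/A.
by rewrite mulmxA -/w w0 mul0mx mxE.
Qed.
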